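(* Fix integers $\tau_1\ge\tau_2\ge 1$. For each integer $n>\tau_1$ let $\mathcal{E}^{(n)}\subseteq\mathbb{R}^2$ be the set of all pairs $$\Big(\mathsf{E}^{(n)}_r,\mathsf{E}^{(n)}_d\Big)=\left(\frac{\log(n\bar\alpha-\bar M)}{\log n},\ \frac{\log \bar M}{\log n}\right)$$ such that $(\bar\alpha,\bar M)$ is achievable for $(n,k,d)=(n,n-\tau_1,n-\tau_2)$ exact-repair regenerating (with $n\bar\alpha-\bar M>0$ and $\bar M>0$). Let $\mathcal{E}$ be the closure of $\limsup_{n\to\infty}\mathcal{E}^{(n)}$, and let $$\mathcal{E}^*=\{(\mathsf{E}_r,\mathsf{E}_d)\in\mathbb{R}^2:\ \mathsf{E}_d\le \mathsf{E}_r+1,\ \ 2\mathsf{E}_d\le 2+\mathsf{E}_r,\ \ \mathsf{E}_d\le 2\}.$$ Then $\mathcal{E}^*=\mathcal{E}$.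
   Context: Write $I_m=\{1,\dots,m\}$. For integers $n,k,d$ with $1\le k\le d\le n-1$, an $(n,k,d,N,N_d,K)$ exact-repair regenerating code consists of encoding functions $f^E_i:I_N\to I_{N_d}$ ($i\in I_n$; node $i$ stores $f^E_i(m)$ for the message $m\in I_N$); for every $A\subseteq I_n$ with $|A|=k$ a decoding function $f^D_A:I_{N_d}^k\to I_N$ with $f^D_A((f^E_i(m))_{i\in A})=m$ for all $m$; and for every $j\in I_n$, every $A\subseteq I_n\setminus\{j\}$ with $|A|=d$ and every $i\in A$ a repair encoding function $F^E_{i,A,j}:I_{N_d}\to I_K$, together with a repair decoding function $F^D_{j,A}:I_K^d\to I_{N_d}$ such that $F^D_{j,A}((F^E_{i,A,j}(f^E_i(m)))_{i\in A})=f^E_j(m)$ for all $m$. A pair $(\bar\alpha,\bar M)$ of reals is achievable for $(n,k,d)$ if for every $\epsilon>0$ there is an $(n,k,d,N,N_d,K)$ exact-repair regenerating code with $\bar\alpha+\epsilon\ge \log N_d/\log K$ and $\bar M-\epsilon\le \log N/\log K$. The limit superior of a sequence of subsets of $\mathbb{R}^2$ is understood as the set of all points that are limits of sequences $x_j\in\mathcal{E}^{(n_j)}$ with $n_j\to\infty$. *)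

(* Defs.v *)
From mathcomp Require Import all_boot.
From Stdlib Require Import Reals.

Set Implicit Arguments.
Unset Strict Implicit.
Unset Printing Implicit Defensive.

(* The paper's I_m = {1,..,m} is modelled by the ordinal type 'I_m = {0,..,m-1}
   (same cardinality).  Nodes are 'I_n. *)

(* The tuple (g i)_{i in A}, encoded as a finite function that is [None]
   outside A. *)
Definition restrict (T : Type) (n : nat) (A : {set 'I_n}) (g : 'I_n -> T)
  : {ffun 'I_n -> option T} :=
  [ffun i => if i \in A then Some (g i) else None].

(* Existence of an (n,k,d,N,N_d,K) exact-repair regenerating code.
   fE i      : encoding function of node i          (I_N -> I_{N_d})
   fD A      : decoding function for the k-set A     (I_{N_d}^A -> I_N)
   FE i A j  : repair encoding function F^E_{i,A,j}  (I_{N_d} -> I_K)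
   FD j A    : repair decoding function F^D_{j,A}    (I_K^A -> I_{N_d}) *)
Definition ER_code (n k d N Nd K : nat) : Prop :=
  exists (fE : 'I_n -> 'I_N -> 'I_Nd)
         (fD : {set 'I_n} -> {ffun 'I_n -> option 'I_Nd} -> 'I_N)
         (FE : 'I_n -> {set 'I_n} -> 'I_n -> 'I_Nd -> 'I_K)
         (FD : 'I_n -> {set 'I_n} -> {ffun 'I_n -> option 'I_K} -> 'I_Nd),
    (forall (A : {set 'I_n}), #|A| = k ->
       forall m : 'I_N, fD A (restrict A (fun i => fE i m)) = m) /\
    (forall (j : 'I_n) (A : {set 'I_n}), j \notin A -> #|A| = d ->
       forall m : 'I_N,
         FD j A (restrict A (fun i => FE i A j (fE i m))) = fE j m).

Local Open Scope R_scope.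

Definition achievable (n k d : nat) (abar Mbar : R) : Prop :=
  forall eps : R, eps > 0 ->
    exists N Nd K : nat, ER_code n k d N Nd K /\
      abar + eps >= ln (INR Nd) / ln (INR K) /\
      Mbar - eps <= ln (INR N) / ln (INR K).

Definition En (tau1 tau2 n : nat) (p : R * R) : Prop :=
  exists abar Mbar : R,
    achievable n (n - tau1) (n - tau2) abar Mbar /\
    INR n * abar - Mbar > 0 /\ Mbar > 0 /\
    p = (ln (INR n * abar - Mbar) / ln (INR n), ln Mbar / ln (INR n)).

(* limsup_{n -> oo} E^(n): limits of x_j in E^(n_j) with n_j -> oo
   (and n_j > tau1, the range where E^(n) is defined). *)
Definition limsupE (tau1 tau2 : nat) (p : R * R) : Prop :=
  exists (nj : nat -> nat) (x : nat -> R * R),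
    (forall j, ltn tau1 (nj j)) /\
    (forall j, En tau1 tau2 (nj j) (x j)) /\
    (forall B : nat, exists J : nat, forall j, leq J j -> leq B (nj j)) /\
    Un_cv (fun j => fst (x j)) (fst p) /\
    Un_cv (fun j => snd (x j)) (snd p).

Definition closure2 (S : R * R -> Prop) (p : R * R) : Prop :=
  forall eps : R, eps > 0 ->
    exists q, S q /\ Rabs (fst q - fst p) < eps /\ Rabs (snd q - snd p) < eps.

Definition Estar (p : R * R) : Prop :=
  snd p <= fst p + 1 /\ 2 * snd p <= 2 + fst p /\ snd p <= 2.

(* Main.v *)
Require Import Defs.
Set Warnings "-notation-overridden -ambiguous-paths".
From mathcomp Require Import all_boot all_algebra.
From Stdlib Require Import Reals Lra Lia ZArith.
From mathcomp Require Import zify.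
Set Implicit Arguments.
Unset Strict Implicit.
Unset Printing Implicit Defensive.

Definition enc (T : finType) (X : {set T}) (m : nat) (x : T) : 'I_m.+1 :=
  inord (index x (enum X)).

Lemma enc_inj (T : finType) (X : {set T}) m x y :
  #|X| <= m.+1 -> x \in X -> y \in X -> enc X m x = enc X m y -> x = y.
Proof.
move=> HX xX yX /(congr1 (@nat_of_ord _)); rewrite /enc.
have hs : size (enum X) <= m.+1 by rewrite -cardE.
have ix : index x (enum X) < size (enum X) by rewrite index_mem mem_enum.
have iy : index y (enum X) < size (enum X) by rewrite index_mem mem_enum.
rewrite (inordK (leq_trans ix hs)) (inordK (leq_trans iy hs)).
move=> e; have := congr1 (nth x (enum X)) e.
by rewrite !nth_index ?mem_enum.
Qed.

Lemma restrictE (T : Type) n (A : {set 'I_n}) (g : 'I_n -> T) i :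
  restrict A g i = if i \in A then Some (g i) else None.
Proof. by rewrite /restrict ffunE. Qed.

Lemma restrict_eq (T : Type) n (A : {set 'I_n}) (g h : 'I_n -> T) :
  restrict A g = restrict A h -> forall i, i \in A -> g i = h i.
Proof.
move=> e i iA; have := congr1 (fun f : {ffun 'I_n -> option T} => f i) e.
by rewrite !restrictE iA => -[].
Qed.

Lemma restrict_ext (T : Type) n (A : {set 'I_n}) (g h : 'I_n -> T) :
  (forall i, i \in A -> g i = h i) -> restrict A g = restrict A h.
Proof.
move=> e; apply/ffunP=> i; rewrite !restrictE.
by case: ifP => // /e ->.
Qed.

Section CodeOf.
Variables (n k d : nat) (Msg Sto Sym : finType) (m0 : Msg).
Variables (fE : 'I_n -> Msg -> Sto) (FE : 'I_n -> {set 'I_n} -> 'I_n -> Sto -> Sym).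
Variables (Nd K : nat).
Hypothesis Hdec : forall A : {set 'I_n}, #|A| = k -> forall m1 m2,
  (forall i, i \in A -> fE i m1 = fE i m2) -> m1 = m2.
Hypothesis Hrep : forall j (A : {set 'I_n}), j \notin A -> #|A| = d -> forall m1 m2,
  (forall i, i \in A -> FE i A j (fE i m1) = FE i A j (fE i m2)) -> fE j m1 = fE j m2.
Hypothesis HNd : forall i, #|[set fE i m | m in Msg]| <= Nd.+1.
Hypothesis HK : forall i (A : {set 'I_n}) j, i \in A -> j \notin A ->
  #|[set FE i A j (fE i m) | m in Msg]| <= K.+1.

Let Si i := [set fE i m | m in Msg].
Let Ji i A j := [set FE i A j (fE i m) | m in Msg].
Let fE' i (u : 'I_#|Msg|) : 'I_Nd.+1 := enc (Si i) Nd (fE i (enum_val u)).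
Let dec i (x : 'I_Nd.+1) : Sto :=
  odflt (fE i m0) [pick s in Si i | enc (Si i) Nd s == x].
Let FE' i A j (x : 'I_Nd.+1) : 'I_K.+1 := enc (Ji i A j) K (FE i A j (dec i x)).

Lemma decK i u : dec i (fE' i u) = fE i (enum_val u).
Proof.
rewrite /dec; case: pickP => [s /andP [sS /eqP e] | H] /=.
  apply: (enc_inj (HNd i)) => //; exact: imset_f.
by have := H (fE i (enum_val u)); rewrite imset_f // eqxx.
Qed.

Lemma fE'_inj i u1 u2 : fE' i u1 = fE' i u2 -> fE i (enum_val u1) = fE i (enum_val u2).
Proof. by apply: enc_inj (HNd i) _ _; apply: imset_f. Qed.

Lemma FE'_inj i (A : {set 'I_n}) j u1 u2 : i \in A -> j \notin A ->
  FE' i A j (fE' i u1) = FE' i A j (fE' i u2) ->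
  FE i A j (fE i (enum_val u1)) = FE i A j (fE i (enum_val u2)).
Proof.
move=> iA jA; rewrite /FE' !decK.
by apply: enc_inj (HK iA jA) _ _; apply: imset_f.
Qed.

Lemma code_of : ER_code n k d #|Msg| Nd.+1 K.+1.
Proof.
pose fD (A : {set 'I_n}) (y : {ffun 'I_n -> option 'I_Nd.+1}) : 'I_#|Msg| :=
  odflt (enum_rank m0) [pick u | restrict A (fun i => fE' i u) == y].
pose FD (j : 'I_n) (A : {set 'I_n}) (y : {ffun 'I_n -> option 'I_K.+1}) :=
  fE' j (odflt (enum_rank m0) [pick u | restrict A (fun i => FE' i A j (fE' i u)) == y]).
exists fE', fD, FE', FD; split.
  move=> A HA u; rewrite /fD; case: pickP => [u' /eqP e | H] /=; last first.
    by have := H u; rewrite eqxx.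
  apply: enum_val_inj; apply: (Hdec HA) => i iA.
  by apply: fE'_inj; apply: (restrict_eq e).
move=> j A jA HA u; rewrite /FD; case: pickP => [u' /eqP e | H] /=; last first.
  by have := H u; rewrite eqxx.
suff : fE j (enum_val u') = fE j (enum_val u) by rewrite /fE' => ->.
apply: (Hrep jA HA) => i iA.
by apply: FE'_inj => //; apply: (restrict_eq e).
Qed.
End CodeOf.
Lemma card_ordP n (P : pred nat) : #|[set i : 'I_n | P i]| = count P (iota 0 n).
Proof.
rewrite cardsE cardE /enum_mem -enumT /=.
rewrite -(val_enum_ord n) count_map size_filter.
by apply: eq_count.
Qed.
Lemma count_interval n a b : a <= b <= n -> count (fun x => a <= x < b) (iota 0 n) = b - a.
Proof.
case/andP=> ab bn.
rewrite -(subnKC bn) -(subnKC ab) !iotaD !count_cat /= add0n.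
rewrite (@eq_in_count _ _ pred0) ?count_pred0; last first.
  by move=> x; rewrite mem_iota add0n => /andP [_ xa] /=; rewrite leqNgt xa.
rewrite (@eq_in_count _ _ predT (iota _ (b - a))) ?count_predT ?size_iota; last first.
  by move=> x; rewrite mem_iota subnKC // => /andP [-> ->].
rewrite (@eq_in_count _ _ pred0 (iota _ _)) ?count_pred0 ?addn0; last first.
  move=> x; rewrite mem_iota subnKC // subnKC // => /andP [bx _] /=.
  by rewrite ltnNge bx andbF.
by rewrite add0n addKn.
Qed.
Lemma card_interval n a b : a <= b <= n -> #|[set i : 'I_n | a <= i < b]| = b - a.
Proof. by move=> h; rewrite (card_ordP n (fun x => a <= x < b)) count_interval. Qed.

Lemma restrict_pffun (T : finType) n (A : {set 'I_n}) (g : 'I_n -> T) :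
  restrict A g \in pffun_on None A (codom (@Some T)).
Proof.
apply/pffun_onP; split.
  by apply/subsetP=> x; rewrite inE restrictE; case: ifP.
move=> y /mapP [x]; rewrite mem_enum => xA ->.
by rewrite restrictE xA codom_f.
Qed.

Lemma card_codom_some (T : finType) : #|codom (@Some T)| = #|T|.
Proof. by apply: card_codom => x y []. Qed.

Lemma ER_bound n k d N Nd K t : ER_code n k d N Nd K -> k <= d -> d < n -> t <= k ->
  N <= expn Nd t * expn K ((k - t) * (d - t + 1)).
Proof.
move=> [fE [fD [FE [FD [Hd Hr]]]]] kd dn tk.
pose T0 := [set i : 'I_n | 0 <= i < t].
pose Dk := [set i : 'I_n | t <= i < k].
pose Cf := [set i : 'I_n | t <= i < d.+1].
pose H (i : 'I_n) := [set u : 'I_n | 0 <= u < d.+1] :\ i.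
pose Q := pffun_on None Cf (codom (@Some 'I_K)).
pose phi (u : 'I_N) := (restrict T0 (fun i => fE i u),
  [ffun i => if i \in Dk then restrict Cf (fun h => FE h (H i) i (fE h u))
             else [ffun _ => None]]).
have cT0 : #|T0| = t by rewrite card_interval ?subn0 // (leq_trans tk) // (leq_trans kd) // ltnW.
have cDk : #|Dk| = k - t by rewrite card_interval // tk (leq_trans kd) // ltnW.
have td : t <= d by apply: leq_trans tk kd.
have cCf : #|Cf| = d - t + 1.
  rewrite card_interval; first by rewrite addn1 subSn.
  by rewrite dn andbT (leq_trans td).
have cH (i : 'I_n) : i < d.+1 -> #|H i| = d.
  move=> id; have := cardsD1 i [set u : 'I_n | 0 <= u < d.+1].
  rewrite card_interval ?subn0 // inE id /= add1n => -[] <-.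
  by [].
have injphi : injective phi.
  move=> u1 u2 [e1 /ffunP e2].
  have hT (i : 'I_n) : i < t -> fE i u1 = fE i u2.
    by move=> it; apply: (restrict_eq e1); rewrite inE it.
  have hK (i : 'I_n) : i < k -> fE i u1 = fE i u2.
    move=> ik; case: (ltnP i t) => [/hT // | ti].
    have iH : i \notin H i by rewrite !inE eqxx.
    have cHi : #|H i| = d by apply: cH; rewrite ltnS (leq_trans (ltnW ik)).
    rewrite -(Hr i (H i) iH cHi u1) -(Hr i (H i) iH cHi u2).
    congr (FD i (H i)); apply: restrict_ext => h hH.
    case: (ltnP h t) => [/hT -> // | th].
    have := e2 i; rewrite !ffunE inE ti ik /= => e3.
    apply: (restrict_eq e3); move: hH; rewrite !inE th /=.
    by case/andP.
  pose A0 := [set i : 'I_n | 0 <= i < k].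
  have cA0 : #|A0| = k by rewrite card_interval ?subn0 // (leq_trans kd) // ltnW.
  rewrite -(Hd A0 cA0 u1) -(Hd A0 cA0 u2); congr (fD A0).
  by apply: restrict_ext => i; rewrite inE => /hK.
have : #|[set phi u | u in 'I_N]| <= #|setX [set x in pffun_on None T0 (codom (@Some 'I_Nd))]
                                           [set x in pffun_on [ffun _ => None] Dk Q]|.
  apply: subset_leq_card; apply/subsetP => x /imsetP [u _ ->].
  rewrite in_setX !in_set /=; apply/andP; split; first exact: restrict_pffun.
  apply/pffun_onP; split.
    by apply/subsetP => i; rewrite inE ffunE; case: ifP => //; rewrite eqxx.
  move=> y /mapP [i]; rewrite mem_enum => iD ->.
  by rewrite ffunE iD restrict_pffun.
rewrite card_imset // card_ord cardsX !cardsE !card_pffun_on !card_codom_some card_ord.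
rewrite cT0 cDk cCf -expnM card_ord (mulnC (d - t + 1)) => h; exact h.
Qed.

Module LayeredM.
Import GRing.Theory.

Section Layered.
Variables (n t1 t2 r p : nat).
Hypotheses (t2pos : 0 < t2) (t21 : t2 <= t1) (t1r : t1 < r) (rn : r <= n)
  (pp : prime p) (np : n < p).
Local Open Scope ring_scope.

Let F := 'F_p.
Definition Layer := {S : {set 'I_n} | #|S| == r}.
Let pt (i : 'I_n) : F := (val i)%:R.

Lemma pt_inj : injective pt.
Proof.
move=> i j; rewrite /pt => /(congr1 (fun x : 'F_p => nat_of_ord x)) /=; rewrite !val_Fp_nat // !modn_small => [e||].
- exact: val_inj.
- exact: ltn_trans (ltn_ord j) np.
- exact: ltn_trans (ltn_ord i) np.
Qed.

Lemma poly_det m (c1 c2 : m.-tuple F) (B : {set 'I_n}) : (m <= #|B|)%nat ->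
  (forall i, i \in B -> (Poly c1).[pt i] = (Poly c2).[pt i]) -> c1 = c2.
Proof.
move=> mB H.
have [q0|qn0] := eqVneq (Poly c1 - Poly c2) 0.
  have e : Poly c1 = Poly c2 by apply/eqP; rewrite -subr_eq0 q0.
  apply: val_inj; apply: (@eq_from_nth _ 0); first by rewrite !size_tuple.
  by move=> i _; have := congr1 (fun q : {poly F} => q`_i) e; rewrite !coef_Poly.
exfalso.
have sq : leq (size (Poly c1 - Poly c2)) m.
  apply: leq_trans (size_polyD _ _) _; rewrite geq_max size_polyN.
  by rewrite !(leq_trans (size_Poly _)) // size_tuple.
have ha : all (root (Poly c1 - Poly c2)) (map pt (enum B)).
  apply/allP => x /mapP [i]; rewrite mem_enum => iB ->.
  by rewrite /root hornerD hornerN H // subrr.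
have hu : uniq (map pt (enum B)).
  by rewrite map_inj_uniq ?enum_uniq //; apply: pt_inj.
have := max_poly_roots qn0 ha hu; rewrite size_map -cardE => h.
by have := leq_trans h (leq_trans sq mB); rewrite ltnn.
Qed.

Lemma card_meet (S A : {set 'I_n}) c : #|A| = (n - c)%nat -> leq c n ->
  leq (#|S| - c) #|S :&: A|.
Proof.
move=> cA cn; rewrite -(cardsID A S) leq_subLR addnC leq_add2r.
apply: leq_trans (subset_leq_card (_ : S :\: A \subset ~: A)) _.
  by apply/subsetP => x; rewrite !inE => /andP [].
have h := cardsC A; rewrite cA card_ord in h; lia.
Qed.

Definition LMsg := {ffun Layer -> (r - t1).-tuple F}.
Definition lfE (i : 'I_n) (m : LMsg) : {ffun Layer -> F} :=
  [ffun S : Layer => if i \in val S then (Poly (m S)).[pt i] else 0].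
Definition lFE (i : 'I_n) (A : {set 'I_n}) (j : 'I_n) (s : {ffun Layer -> F}) :
  {ffun Layer -> F} := [ffun S : Layer => if j \in val S then s S else 0].

Lemma l_dec (A : {set 'I_n}) : #|A| = (n - t1)%nat -> forall m1 m2,
  (forall i, i \in A -> lfE i m1 = lfE i m2) -> m1 = m2.
Proof.
move=> cA m1 m2 H; apply/ffunP => S.
apply: (@poly_det _ _ _ (val S :&: A)).
  have := card_meet (val S) cA (leq_trans (ltnW t1r) rn).
  by rewrite (eqP (valP S)).
move=> i; rewrite inE => /andP [iS iA].
by have := congr1 (fun f : {ffun Layer -> F} => f S) (H i iA); rewrite !ffunE iS.
Qed.

Lemma l_rep j (A : {set 'I_n}) : j \notin A -> #|A| = (n - t2)%nat -> forall m1 m2,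
  (forall i, i \in A -> lFE i A j (lfE i m1) = lFE i A j (lfE i m2)) ->
  lfE j m1 = lfE j m2.
Proof.
move=> jA cA m1 m2 H; apply/ffunP => S; rewrite !ffunE.
case: ifP => // jS; congr (_.[_]); congr Poly; congr tval.
apply: (@poly_det _ _ _ (val S :&: A)).
  have := card_meet (val S) cA (leq_trans (leq_trans t21 (ltnW t1r)) rn).
  rewrite (eqP (valP S)); apply: leq_trans; exact: leq_sub2l.
move=> i; rewrite inE => /andP [iS iA].
have := congr1 (fun f : {ffun Layer -> F} => f S) (H i iA).
by have := congr1 (fun f : {ffun Layer -> F} => f S) (H i iA); rewrite !ffunE jS iS.
Qed.

Lemma card_Li i : leq #|[set S : Layer | i \in val S]| 'C(n.-1, r.-1).
Proof.
pose f (S : Layer) := val S :\ i.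
rewrite -(card_in_imset (f := f)); last first.
  move=> S1 S2; rewrite !inE => iS1 iS2 e; apply: val_inj.
  by move: e; rewrite /f => e; rewrite -(setD1K iS1) -(setD1K iS2) e.
have -> : n.-1 = #|[set~ i]| by rewrite cardsC1 card_ord.
rewrite -cards_draws; apply: subset_leq_card; apply/subsetP => T /imsetP [S].
rewrite inE => iS ->; rewrite inE; apply/andP; split.
  by apply/subsetP => x; rewrite !inE => /andP [].
have := cardsD1 i (val S); rewrite iS (eqP (valP S)) add1n => ->.
by [].
Qed.

Lemma card_Lij i j : i != j ->
  leq #|[set S : Layer | (i \in val S) && (j \in val S)]| 'C(n.-2, r.-2).
Proof.
move=> ij.
pose f (S : Layer) := val S :\ i :\ j.
rewrite -(card_in_imset (f := f)); last first.
  move=> S1 S2; rewrite !inE => /andP [iS1 jS1] /andP [iS2 jS2] e; apply: val_inj.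
  have jS1' : j \in val S1 :\ i by rewrite !inE eq_sym ij.
  have jS2' : j \in val S2 :\ i by rewrite !inE eq_sym ij.
  move: e; rewrite /f => e.
  by rewrite -(setD1K iS1) -(setD1K iS2) -(setD1K jS1') -(setD1K jS2') e.
have -> : n.-2 = #|[set~ i] :\ j|.
  have := cardsD1 j [set~ i]; rewrite !inE eq_sym ij cardsC1 card_ord add1n.
  by move=> e; rewrite -[n.-2]/(n.-1.-1) e.
rewrite -cards_draws; apply: subset_leq_card; apply/subsetP => T /imsetP [S].
rewrite inE => /andP [iS jS] ->; rewrite inE; apply/andP; split.
  by apply/subsetP => x; rewrite !inE => /and3P [-> ->].
have jS' : j \in val S :\ i by rewrite !inE eq_sym ij.
have := cardsD1 j (val S :\ i); rewrite jS' add1n => e.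
have := cardsD1 i (val S); rewrite iS (eqP (valP S)) add1n e => ->.
by [].
Qed.

Lemma card_LMsg : #|{: LMsg}| = expn p ((r - t1) * 'C(n, r)).
Proof.
rewrite card_ffun card_tuple card_Fp // card_sig -expnM.
congr expn; congr muln.
rewrite -[n in 'C(n, _)](card_ord n) -card_draws cardsE.
by apply: eq_card => S; rewrite !inE.
Qed.

Lemma pff_card (D : {set Layer}) (X : {set {ffun Layer -> F}}) :
  X \subset [set x in pffun_on 0 D [set: F]] -> leq #|X| (expn p #|D|).
Proof.
move=> sX; apply: leq_trans (subset_leq_card sX) _.
by rewrite cardsE card_pffun_on cardsT card_Fp.
Qed.

Lemma layered_code : ER_code n (n - t1) (n - t2) (expn p ((r - t1) * 'C(n, r)))
  (expn p 'C(n.-1, r.-1)) (expn p 'C(n.-2, r.-2)).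
Proof.
have p0 : (0 < p)%nat by apply: prime_gt0.
have e1 : expn p 'C(n.-1, r.-1) = (expn p 'C(n.-1, r.-1)).-1.+1 by rewrite prednK // expn_gt0 p0.
have e2 : expn p 'C(n.-2, r.-2) = (expn p 'C(n.-2, r.-2)).-1.+1 by rewrite prednK // expn_gt0 p0.
rewrite -card_LMsg e1 e2.
apply: (@code_of _ _ _ LMsg _ _ [ffun _ => [tuple of nseq (r - t1) 0]] lfE lFE).
- exact: l_dec.
- exact: l_rep.
- move=> i; rewrite -e1; apply: leq_trans (pff_card _) _; last first.
    by apply: leq_pexp2l => //; apply: card_Li.
  apply/subsetP => x /imsetP [m _ ->]; rewrite inE; apply/pffun_onP; split.
    by apply/subsetP => S; rewrite !inE ffunE; case: ifP => //; rewrite eqxx.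
  by move=> y _; rewrite inE.
- move=> i A j iA jA; rewrite -e2.
  apply: leq_trans (pff_card (D := [set S : Layer | (i \in val S) && (j \in val S)]) _) _; last first.
    apply: leq_pexp2l => //; apply: card_Lij.
    by apply/eqP => e; move: jA; rewrite -e iA.
  apply/subsetP => x /imsetP [m _ ->]; rewrite inE; apply/pffun_onP; split.
    apply/subsetP => S; rewrite !inE !ffunE.
    by case: (j \in val S); case: (i \in val S); rewrite ?eqxx.
  by move=> y _; rewrite inE.
Qed.
End Layered.

End LayeredM.
Import LayeredM.

Lemma code_pow n k d N Nd K v Nd' K' : ER_code n k d N Nd K -> 0 < N ->
  leq (expn Nd v) Nd'.+1 -> leq (expn K v) K'.+1 ->
  ER_code n k d (expn N v) Nd'.+1 K'.+1.
Proof.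
move=> [fE [fD [FE [FD [Hd Hr]]]]] N0 hNd hK.
have -> : expn N v = #|{ffun 'I_v -> 'I_N}| by rewrite card_ffun !card_ord.
pose fE' i (m : {ffun 'I_v -> 'I_N}) : {ffun 'I_v -> 'I_Nd} := [ffun u => fE i (m u)].
pose FE' i A j (s : {ffun 'I_v -> 'I_Nd}) : {ffun 'I_v -> 'I_K} := [ffun u => FE i A j (s u)].
apply: (@code_of _ _ _ _ _ _ [ffun _ => Ordinal N0] fE' FE').
- move=> A cA m1 m2 H; apply/ffunP => u.
  rewrite -(Hd A cA (m1 u)) -(Hd A cA (m2 u)); congr (fD A); apply: restrict_ext => i iA.
  by have := congr1 (fun f : {ffun 'I_v -> 'I_Nd} => f u) (H i iA); rewrite !ffunE.
- move=> j A jA cA m1 m2 H; apply/ffunP => u; rewrite !ffunE.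
  rewrite -(Hr j A jA cA (m1 u)) -(Hr j A jA cA (m2 u)); congr (FD j A).
  apply: restrict_ext => i iA.
  by have := congr1 (fun f : {ffun 'I_v -> 'I_K} => f u) (H i iA); rewrite !ffunE.
- move=> i; apply: leq_trans (max_card _) _.
  by rewrite card_ffun !card_ord.
- move=> i A j _ _; apply: leq_trans (max_card _) _.
  by rewrite card_ffun !card_ord.
Qed.

Section Reals_part.
Local Open Scope R_scope.

Lemma ln_le x y : 0 < x -> x <= y -> ln x <= ln y.
Proof.
move=> x0 /Rle_lt_or_eq_dec [xy|<-]; last by apply: Rle_refl.
by apply: Rlt_le; apply: ln_increasing.
Qed.

Lemma ln_nonpos x : x <= 0 -> ln x = 0.
Proof. intro h; unfold ln; destruct (Rlt_dec 0 x) as [h'|h']; [exfalso; lra|reflexivity]. Qed.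

Lemma ln_INR_ge0 m : 0 <= ln (INR m).
Proof.
case: m => [|m]; first by rewrite ln_nonpos /=; lra.
rewrite -ln_1; apply: ln_le; first lra.
by rewrite S_INR; have := pos_INR m; lra.
Qed.

Lemma expn_pow m e : expn m e = Nat.pow m e.
Proof. by elim: e => // e IH; rewrite expnS IH /= mulnE. Qed.

Lemma INR_expn m e : INR (expn m e) = INR m ^ e.
Proof. by rewrite expn_pow pow_INR. Qed.

Lemma INR_muln a b : INR (muln a b) = INR a * INR b.
Proof. by rewrite mulnE mult_INR. Qed.

Lemma INR_addn a b : INR (addn a b) = INR a + INR b.
Proof. by rewrite addnE plus_INR. Qed.

Lemma INR_subn a b : leq b a -> INR (subn a b) = INR a - INR b.
Proof. move=> h; rewrite subnE minus_INR //; apply/leP; exact h. Qed.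

Lemma ER_Nd_pos n k d N Nd K : ER_code n k d N Nd K -> (0 < n)%nat -> (0 < N)%nat -> (0 < Nd)%nat.
Proof.
move=> [fE _] n0 N0.
exact: leq_ltn_trans (leq0n _) (ltn_ord (fE (Ordinal n0) (Ordinal N0))).
Qed.

Lemma ln_pos_INR m : (1 < m)%nat -> 0 < ln (INR m).
Proof.
move=> h; rewrite -ln_1; apply: ln_increasing; first lra.
have : (1 < m)%coq_nat by apply/ltP.
by move/lt_INR; rewrite /=.
Qed.

Lemma ratio_bound (N Nd K t c : nat) :
  leq N (muln (expn Nd t) (expn K c)) -> (0 < Nd)%nat ->
  ln (INR N) / ln (INR K) <= INR t * (ln (INR Nd) / ln (INR K)) + INR c.
Proof.
move=> hN Nd0.
have [K1|K1] := leqP K 1.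
  have -> : ln (INR K) = 0.
    have : (K = 0%nat \/ K = 1%nat) by lia.
    by case=> ->; [rewrite ln_nonpos /=; lra | rewrite /= ln_1].
  rewrite /Rdiv Rinv_0 !Rmult_0_r Rplus_0_l; exact: pos_INR.
have lK := ln_pos_INR K1.
case: N hN => [|N] hN.
  rewrite ln_nonpos /=; last lra.
  rewrite /Rdiv Rmult_0_l; apply: Rplus_le_le_0_compat; last exact: pos_INR.
  apply: Rmult_le_pos; first exact: pos_INR.
  apply: Rmult_le_pos; first exact: ln_INR_ge0.
  by apply: Rlt_le; apply: Rinv_0_lt_compat.
have Ndp : 0 < INR Nd by apply: lt_0_INR; apply/ltP.
have Kp : 0 < INR K by apply: lt_0_INR; apply/ltP; lia.
have : ln (INR N.+1) <= ln (INR (muln (expn Nd t) (expn K c))).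
  apply: ln_le; first by apply: lt_0_INR; lia.
  by apply: le_INR; apply/leP.
rewrite INR_muln !INR_expn ln_mult ?ln_pow //; try by apply: pow_lt.
move=> h.
apply: (Rmult_le_reg_r (ln (INR K))) => //.
rewrite Rmult_plus_distr_r /Rdiv Rmult_assoc Rinv_l ?Rmult_1_r; last lra.
rewrite Rmult_assoc (Rmult_assoc (ln (INR Nd))) Rinv_l ?Rmult_1_r; last lra.
lra.
Qed.

Lemma ach_bound n k d a M t : achievable n k d a M -> leq k d -> leq d.+1 n -> leq t k ->
  M <= INR t * a + INR (muln (k - t) (d - t + 1)).
Proof.
move=> ha kd dn tk.
apply: Rnot_lt_le => hlt.
set c := INR (muln (k - t) (d - t + 1)) in hlt.
pose eps := (M - INR t * a - c) / (2 * (INR t + 1)).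
have tp := pos_INR t.
have eps0 : eps > 0.
  apply: Rdiv_lt_0_compat; lra.
have [N [Nd [K [code [h1 h2]]]]] := ha eps eps0.
have hb := ER_bound code kd dn tk.
have key : ln (INR N) / ln (INR K) <= INR t * (a + eps) + c.
  case: N hb h1 h2 code => [|N] hb h1 h2 code.
    have r0 : ln (INR 0) / ln (INR K) = 0 by rewrite ln_nonpos /= /Rdiv ?Rmult_0_l //; lra.
    rewrite r0.
    apply: Rplus_le_le_0_compat; last exact: pos_INR.
    apply: Rmult_le_pos => //.
    have : 0 <= ln (INR Nd) / ln (INR K).
      rewrite /Rdiv; apply: Rmult_le_pos; first exact: ln_INR_ge0.
      have := ln_INR_ge0 K => /Rle_lt_or_eq_dec [h|<-].
        by apply: Rlt_le; apply: Rinv_0_lt_compat.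
      by rewrite Rinv_0; lra.
    lra.
  have Nd0 : (0 < Nd)%nat.
    apply: (ER_Nd_pos code) => //; exact: leq_ltn_trans (leq0n _) dn.
  apply: Rle_trans (ratio_bound hb Nd0) _.
  rewrite /c; apply: Rplus_le_compat_r; apply: Rmult_le_compat_l => //; lra.
have : M - eps <= INR t * a + c + INR t * eps by lra.
have : (INR t + 1) * eps * 2 = M - INR t * a - c.
  rewrite /eps; field; lra.
nra.
Qed.

Lemma nat_floor x : 0 <= x -> exists s : nat, INR s <= x < INR s + 1.
Proof.
move=> x0; have [h1 h2] := archimed x.
have up0 : (0 < up x)%Z by apply: lt_0_IZR; lra.
exists (Z.to_nat (up x - 1)).
rewrite INR_IZR_INZ Z2Nat.id; last lia.
rewrite minus_IZR /=; lra.
Qed.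

Lemma core (k : nat) (nR T a M : R) : 1 <= T -> INR k + T <= nR -> INR k + 1 <= nR ->
  0 < M -> 0 < nR * a - M ->
  (forall s : nat, leq s k -> M <= (INR k - INR s) * a + INR s * (INR s + T)) ->
  M <= nR * nR /\ M <= nR * (nR * a - M) /\ M * M <= 16 * T * (nR * nR) * (nR * a - M).
Proof.
move=> T1 kT kn M0 R0 H.
have k0 := pos_INR k.
have h0 := H 0%nat (leq0n k); rewrite /= in h0.
have hk := H k (leqnn k).
have a0 : 0 < a by nra.
have Ma : M <= INR k * a by lra.
have Mk : M <= INR k * (INR k + T) by nra.
have Mn : M <= nR * a by nra.
have Ra : a <= nR * a - M by nra.
split; first by nra.
split; first by nra.
have M2 : M * M <= (nR * a) * (nR * a) by nra.
have [aT|aT] := Rle_lt_dec a (4 * T).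
  have : a * a <= 4 * T * (nR * a - M) by nra.
  nra.
have a2 : 0 <= a / 2 by lra.
have [s [s1 s2]] := nat_floor a2.
have [sk|sk] := leqP s k.
  have hs := H s sk.
  have s4 : a / 4 <= INR s by lra.
  have : INR s * (a / 4) <= nR * a - M by nra.
  have h16 : a * a <= 16 * (nR * a - M) by nra.
  have nn : 0 <= nR * nR by nra.
  have e1 : (nR * a) * (nR * a) = nR * nR * (a * a) by ring.
  have h2 : nR * nR * (a * a) <= nR * nR * (16 * (nR * a - M)) by apply: Rmult_le_compat_l.
  have h3 : 16 * (nR * a - M) <= 16 * T * (nR * a - M) by nra.
  have h4 : nR * nR * (16 * (nR * a - M)) <= nR * nR * (16 * T * (nR * a - M)) by apply: Rmult_le_compat_l.
  have e2 : nR * nR * (16 * T * (nR * a - M)) = 16 * T * (nR * nR) * (nR * a - M) by ring.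
  lra.
have : INR k < INR s by apply: lt_INR; apply/ltP.
move=> ks.
have MR : M <= nR * a - M by nra.
have Mkn : M <= INR k * nR by nra.
have kn' : INR k <= nR by lra.
have h1 : M * M <= (INR k * nR) * (nR * a - M) by apply: Rmult_le_compat; lra.
have h2 : INR k * nR <= nR * nR by apply: Rmult_le_compat_r; lra.
have h3 : nR * nR <= 16 * T * (nR * nR) by nra.
have h4 : (INR k * nR) * (nR * a - M) <= (16 * T * (nR * nR)) * (nR * a - M).
  apply: Rmult_le_compat_r; lra.
lra.
Qed.

Lemma div_le x y L : 0 < L -> x <= y * L -> x / L <= y.
Proof.
move=> L0 h; apply: (Rmult_le_reg_r L) => //.
rewrite /Rdiv Rmult_assoc Rinv_l ?Rmult_1_r //; lra.
Qed.

Lemma En_ineq tau1 tau2 n p : leq 1 tau2 -> leq tau2 tau1 -> (tau1 < n)%nat ->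
  En tau1 tau2 n p ->
  snd p <= 2 /\ snd p <= fst p + 1 /\
  2 * snd p <= 2 + fst p + ln (16 * INR (tau1 - tau2 + 1)) / ln (INR n).
Proof.
move=> t2p t21 t1n [a [M [ha [R0 [M0 ->]]]]] /=.
set k := (n - tau1)%nat; set d := (n - tau2)%nat.
have kd : leq k d by rewrite /k /d; lia.
have dn : leq d.+1 n by rewrite /d; lia.
have T1 : 1 <= INR (tau1 - tau2 + 1).
  by rewrite INR_addn /=; have := pos_INR (tau1 - tau2); lra.
have kT : INR k + INR (tau1 - tau2 + 1) <= INR n.
  rewrite -INR_addn; apply: le_INR; apply/leP; rewrite /k; lia.
have kn : INR k + 1 <= INR n.
  have -> : 1 = INR 1 by [].
  rewrite -INR_addn; apply: le_INR; apply/leP; rewrite /k; lia.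
have H : forall s : nat, leq s k ->
    M <= (INR k - INR s) * a + INR s * (INR s + INR (tau1 - tau2 + 1)).
  move=> s sk.
  have := ach_bound ha kd dn (leq_subr s k).
  have e1 : muln (k - (k - s)) (d - (k - s) + 1) = muln s (s + (tau1 - tau2 + 1)).
    rewrite /k /d; f_equal; lia.
  by rewrite e1 INR_muln INR_addn INR_subn.
have [c1 [c2 c3]] := core T1 kT kn M0 R0 H.
have n1 : (1 < n)%nat by lia.
have ln0 := ln_pos_INR n1.
have nR0 : 0 < INR n by apply: lt_0_INR; apply/ltP; lia.
set R := INR n * a - M in R0 c2 c3 *.
split; last split.
- apply: div_le => //.
  have := ln_le M0 c1; rewrite ln_mult //; lra.
- apply: div_le => //.
  have := ln_le M0 c2; rewrite ln_mult //.
  rewrite Rmult_plus_distr_r /Rdiv Rmult_assoc Rinv_l ?Rmult_1_r; lra.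
- have C0 : 0 < 16 * INR (tau1 - tau2 + 1) by lra.
  have := ln_le (Rmult_lt_0_compat _ _ M0 M0) c3.
  have nn0 : 0 < INR n * INR n by nra.
  have Cn0 : 0 < 16 * INR (tau1 - tau2 + 1) * (INR n * INR n) by nra.
  rewrite (ln_mult M M) // (ln_mult _ R) // (ln_mult _ (INR n * INR n)) // (ln_mult (INR n) (INR n)) //.
  move=> h.
  have : 2 * (ln M / ln (INR n)) * ln (INR n) = 2 * ln M.
    by field; lra.
  have : (2 + ln R / ln (INR n) + ln (16 * INR (tau1 - tau2 + 1)) / ln (INR n)) * ln (INR n)
    = 2 * ln (INR n) + ln R + ln (16 * INR (tau1 - tau2 + 1)).
    by field; lra.
  move=> e2 e1.
  apply: (Rmult_le_reg_r (ln (INR n))) => //; lra.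
Qed.

Lemma lim_le (u v : nat -> R) U V : Un_cv u U -> Un_cv v V ->
  (forall dl, dl > 0 -> exists J, forall j, (J <= j)%coq_nat -> u j <= v j + dl) -> U <= V.
Proof.
move=> cu cv H; apply: Rnot_lt_le => hlt.
pose e := (U - V) / 3.
have e0 : e > 0 by rewrite /e; lra.
have [J1 h1] := cu e e0; have [J2 h2] := cv e e0; have [J3 h3] := H e e0.
pose j := Nat.max J1 (Nat.max J2 J3).
have := h1 j ltac:(rewrite /j; lia); have := h2 j ltac:(rewrite /j; lia).
have := h3 j ltac:(rewrite /j; lia).
rewrite /Rdist => a /Rabs_def2 [b1 b2] /Rabs_def2 [c1 c2].
rewrite /e in b1 b2 c1 c2 a e0; lra.
Qed.

Lemma cv_const c : Un_cv (fun _ => c) c.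
Proof. by move=> eps e0; exists 0%nat => j _; rewrite /Rdist Rminus_diag Rabs_R0. Qed.

Lemma cv_scal (u : nat -> R) U c : Un_cv u U -> Un_cv (fun j => c * u j) (c * U).
Proof. by move=> h; apply: CV_mult => //; apply: cv_const. Qed.

Lemma limsup_Estar tau1 tau2 p : leq 1 tau2 -> leq tau2 tau1 ->
  limsupE tau1 tau2 p -> Estar p.
Proof.
move=> t2p t21 [nj [x [hgt [hE [hinf [cv1 cv2]]]]]].
have I j := En_ineq t2p t21 (hgt j) (hE j).
set c := ln (16 * INR (tau1 - tau2 + 1)) in I.
split; last split.
- apply: (lim_le cv2 (CV_plus _ _ _ _ cv1 (cv_const 1))) => dl d0.
  by exists 0%nat => j _; have [_ [h _]] := I j; lra.
- have := lim_le (cv_scal 2 cv2) (CV_plus _ _ _ _ (cv_const 2) cv1).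
  apply => dl d0.
  have [s [s1 s2]] := nat_floor (Rlt_le _ _ (exp_pos (c / dl))).
  have [J hJ] := hinf s.+1.
  exists J => j jJ.
  have hn : leq s.+1 (nj j) by apply: hJ; apply/leP.
  have [_ [_ h]] := I j.
  have lnp : exp (c / dl) < INR (nj j).
    apply: Rlt_le_trans (_ : INR s.+1 <= _); first by rewrite S_INR.
    by apply: le_INR; apply/leP.
  have := ln_increasing _ _ (exp_pos _) lnp; rewrite ln_exp => hl.
  have c0 : 0 <= c.
    rewrite /c -ln_1; apply: ln_le; first lra.
    by rewrite INR_addn /=; have := pos_INR (tau1 - tau2); lra.
  have hl0 : 0 < ln (INR (nj j)).
    have : 0 <= c / dl by apply: Rmult_le_pos; [lra | apply: Rlt_le; apply: Rinv_0_lt_compat].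
    lra.
  have : c / ln (INR (nj j)) <= dl.
    apply: div_le => //.
    have : c = c / dl * dl by field; lra.
    nra.
  lra.
- apply: (lim_le cv2 (cv_const 2)) => dl d0.
  by exists 0%nat => j _; have [h _] := I j; lra.
Qed.

Lemma closure_Estar (S : R * R -> Prop) p : (forall q, S q -> Estar q) ->
  closure2 S p -> Estar p.
Proof.
move=> hS hc.
have key : forall f : R * R -> R, (forall q, Estar q -> f q <= 0) ->
    (forall q1 q2, Rabs (fst q1 - fst q2) < 1 -> Rabs (snd q1 - snd q2) < 1 -> True) ->
    True by [].
have L : forall (g : R -> R -> R) (A B : R), A > 0 -> B > 0 ->
  (forall q, Estar q -> g (fst q) (snd q) <= 0) ->
  (forall x1 y1 x2 y2 e, Rabs (x1 - x2) < e -> Rabs (y1 - y2) < e -> g x2 y2 <= g x1 y1 + (A + B) * e) ->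
  g (fst p) (snd p) <= 0.
  move=> g A B A0 B0 hg hl; apply: Rnot_lt_le => hlt.
  pose e := g (fst p) (snd p) / (2 * (A + B)).
  have e0 : e > 0 by apply: Rdiv_lt_0_compat; lra.
  have [q [Sq [h1 h2]]] := hc e e0.
  have := hl _ _ _ _ _ h1 h2; have := hg q (hS q Sq).
  have : (A + B) * e * 2 = g (fst p) (snd p) by rewrite /e; field; lra.
  lra.
split; last split.
- have := L (fun x y => y - x - 1) 1 1 Rlt_0_1 Rlt_0_1.
  have H1 : forall q, Estar q -> snd q - fst q - 1 <= 0 by move=> q [h _]; lra.
  move/(_ H1) => H2.
  suff : snd p - fst p - 1 <= 0 by lra.
  apply: H2 => x1 y1 x2 y2 e /Rabs_def2 [a1 a2] /Rabs_def2 [b1 b2]; lra.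
- have := L (fun x y => 2 * y - 2 - x) 1 2 Rlt_0_1 ltac:(lra).
  have H1 : forall q, Estar q -> 2 * snd q - 2 - fst q <= 0 by move=> q [_ [h _]]; lra.
  move/(_ H1) => H2.
  suff : 2 * snd p - 2 - fst p <= 0 by lra.
  apply: H2 => x1 y1 x2 y2 e /Rabs_def2 [a1 a2] /Rabs_def2 [b1 b2]; lra.
- have := L (fun x y => y - 2) 1 1 Rlt_0_1 Rlt_0_1.
  have H1 : forall q, Estar q -> snd q - 2 <= 0 by move=> q [_ [_ h]]; lra.
  move/(_ H1) => H2.
  suff : snd p - 2 <= 0 by lra.
  apply: H2 => x1 y1 x2 y2 e /Rabs_def2 [a1 a2] /Rabs_def2 [b1 b2]; lra.
Qed.

Lemma ach_from_code n k d abar Mbar N Nd K : ER_code n k d N Nd K ->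
  ln (INR Nd) / ln (INR K) <= abar -> Mbar <= ln (INR N) / ln (INR K) ->
  achievable n k d abar Mbar.
Proof.
move=> c h1 h2 eps e0; exists N, Nd, K; split => //; split; lra.
Qed.

Lemma ratio_pow p e1 e2 : prime p -> (0 < e2)%nat ->
  ln (INR (expn p e1)) / ln (INR (expn p e2)) = INR e1 / INR e2.
Proof.
move=> pp e20.
have p1 : (1 < p)%nat by apply: prime_gt1.
have lp := ln_pos_INR p1.
have pp0 : 0 < INR p by apply: lt_0_INR; apply/ltP; lia.
have e2p : 0 < INR e2 by apply: lt_0_INR; apply/ltP; lia.
rewrite !INR_expn !ln_pow //; field; lra.
Qed.

Lemma layered_ach n t1 t2 r (A B : R) :
  (0 < t2)%nat -> leq t2 t1 -> (t1 < r)%nat -> leq r n -> (1 < n)%nat ->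
  0 < A -> 0 < B ->
  B * INR r * (INR r - 1) < (INR r - INR t1) * INR n * (INR n - 1) ->
  INR r * B < (INR r - INR t1) * A ->
  achievable n (n - t1) (n - t2) (A / INR n) B.
Proof.
move=> t2p t21 t1r rn n1 A0 B0 S1 S2.
have [p np pp] := prime_above n.
set L := 'C(n, r); set c1 := 'C(n.-1, r.-1); set c2 := 'C(n.-2, r.-2).
have r1 : (1 < r)%nat by lia.
have id1 : muln n c1 = muln r L.
  by rewrite /c1 /L mul_bin_diag prednK //; lia.
have id2 : muln n.-1 c2 = muln r.-1 c1.
  have e : r.-2.+1 = r.-1 by lia.
  by rewrite /c2 /c1 mul_bin_diag e.
have nR1 : INR n.-1 = INR n - 1 by rewrite -subn1 INR_subn //; lia.
have rR1 : INR r.-1 = INR r - 1 by rewrite -subn1 INR_subn //; lia.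
have id1R : INR n * INR c1 = INR r * INR L by rewrite -!INR_muln id1.
have id2R : (INR n - 1) * INR c2 = (INR r - 1) * INR c1 by rewrite -nR1 -rR1 -!INR_muln id2.
have L1 : 1 <= INR L.
  have : (1 <= L)%coq_nat by apply/leP; rewrite bin_gt0.
  by move/le_INR.
have nR2 : 2 <= INR n.
  have : (2 <= n)%coq_nat by apply/leP.
  by move/le_INR.
have rR : INR t1 + 1 <= INR r.
  have : (t1.+1 <= r)%coq_nat by apply/leP.
  by move/le_INR; rewrite S_INR.
have t1R := pos_INR t1.
have keyc2 : INR c2 * (INR n * (INR n - 1)) = INR r * (INR r - 1) * INR L.
  have e : INR c2 * (INR n * (INR n - 1)) - INR r * (INR r - 1) * INR L =
    INR n * ((INR n - 1) * INR c2 - (INR r - 1) * INR c1) +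
    (INR r - 1) * (INR n * INR c1 - INR r * INR L) by ring.
  rewrite id1R id2R !Rminus_diag Rmult_0_r Rplus_0_l in e; lra.
set U := INR L * (INR r - INR t1) / B.
set Lam := Rmax (INR c2) (INR n * INR c1 / A).
have nn0 : 0 < INR n * (INR n - 1) by nra.
have U1 : INR c2 < U.
  rewrite /U; apply: (Rmult_lt_reg_r B) => //.
  rewrite /Rdiv Rmult_assoc Rinv_l ?Rmult_1_r; last lra.
  apply: (Rmult_lt_reg_r (INR n * (INR n - 1))) => //.
  have e : INR c2 * B * (INR n * (INR n - 1)) = B * INR r * (INR r - 1) * INR L.
    by rewrite Rmult_assoc (Rmult_comm B) -Rmult_assoc keyc2; ring.
  rewrite e.
  have e2 : INR L * (INR r - INR t1) * (INR n * (INR n - 1)) =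
     (INR r - INR t1) * INR n * (INR n - 1) * INR L by ring.
  rewrite e2; apply: Rmult_lt_compat_r => //; lra.
have U2 : INR n * INR c1 / A < U.
  rewrite /U id1R.
  apply: (Rmult_lt_reg_r (A * B)); first nra.
  have e1 : INR r * INR L / A * (A * B) = INR r * B * INR L by field; lra.
  have e2 : INR L * (INR r - INR t1) / B * (A * B) = (INR r - INR t1) * A * INR L by field; lra.
  rewrite e1 e2; apply: Rmult_lt_compat_r => //; lra.
have ULam : Lam < U by apply: Rmax_lub_lt.
have Lam0 : 0 <= Lam by apply: Rle_trans (Rmax_l _ _); apply: pos_INR.
have [s0 [_ s0h]] := nat_floor (Rlt_le _ _ (Rinv_0_lt_compat (U - Lam) ltac:(lra))).
set v := s0.+1.
have vR : 1 < INR v * (U - Lam).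
  have := Rmult_lt_compat_r (U - Lam) _ _ ltac:(lra) s0h.
  by rewrite Rinv_l ?S_INR; lra.
have v0 : 0 < INR v by rewrite /v S_INR; have := pos_INR s0; lra.
have [s1 [s1a s1b]] := nat_floor (Rmult_le_pos _ _ (Rlt_le _ _ v0) Lam0).
set w := s1.+1.
have wR : INR w = INR s1 + 1 by rewrite /w S_INR.
have w1 : INR v * Lam < INR w by lra.
have w2 : INR w < INR v * U by nra.
have hc2 : leq (muln c2 v) w.
  apply: ltnW; apply/ltP; apply: INR_lt; rewrite INR_muln.
  apply: Rle_lt_trans w1; rewrite Rmult_comm; apply: Rmult_le_compat_l; first lra.
  exact: Rmax_l.
have hc1 : INR c1 * INR v * INR n <= INR w * A.
  have : INR v * (INR n * INR c1 / A) <= INR w.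
    apply: Rlt_le; apply: Rle_lt_trans w1; apply: Rmult_le_compat_l; first lra.
    exact: Rmax_r.
  move=> h; have := Rmult_le_compat_r A _ _ (Rlt_le _ _ A0) h.
  have -> : INR v * (INR n * INR c1 / A) * A = INR c1 * INR v * INR n by field; lra.
  by [].
have hM : INR w * B <= (INR r - INR t1) * INR L * INR v.
  have := Rmult_lt_compat_r B _ _ B0 w2.
  have -> : INR v * U * B = (INR r - INR t1) * INR L * INR v by rewrite /U; field; lra.
  lra.
have p0 : (0 < p)%nat by apply: prime_gt0.
have lc := layered_code t2p t21 t1r rn pp np.
have N0 : (0 < expn p (muln (r - t1) L))%nat by rewrite expn_gt0 p0.
have h1 : leq (expn (expn p c1) v) (expn p (muln c1 v)).-1.+1.
  by rewrite prednK ?expn_gt0 ?p0 // -expnM.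
have h2 : leq (expn (expn p c2) v) (expn p w).-1.+1.
  rewrite prednK ?expn_gt0 ?p0 // -expnM; exact: leq_pexp2l.
have pc := code_pow lc N0 h1 h2.
rewrite prednK ?expn_gt0 ?p0 // in pc.
rewrite prednK ?expn_gt0 ?p0 // -expnM in pc.
apply: (ach_from_code pc).
  have w0 : 0 < INR w by rewrite wR; have := pos_INR s1; lra.
  rewrite ratio_pow // INR_muln.
  apply: (Rmult_le_reg_r (INR w * INR n)); first nra.
  have e1 : INR c1 * INR v / INR w * (INR w * INR n) = INR c1 * INR v * INR n by field; lra.
  have e2 : A / INR n * (INR w * INR n) = INR w * A by field; lra.
  by rewrite e1 e2.
have w0 : 0 < INR w by rewrite wR; have := pos_INR s1; lra.
rewrite ratio_pow // !INR_muln INR_subn; last lia.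
apply: (Rmult_le_reg_r (INR w)) => //.
have e1 : (INR r - INR t1) * INR L * INR v / INR w * INR w = (INR r - INR t1) * INR L * INR v.
  by field; lra.
rewrite e1 Rmult_comm; exact hM.
Qed.


Lemma Rpower_pos x y : 0 < Rpower x y.
Proof. exact: exp_pos. Qed.

Lemma eventually_pow (u C : R) : 0 < u ->
  exists N0 : nat, forall n, leq N0 n -> C < Rpower (INR n) u.
Proof.
move=> u0.
set Y := Rpower (Rmax C 1) (/ u).
have Y0 : 0 < Y by apply: Rpower_pos.
have [s [_ s2]] := nat_floor (Rlt_le _ _ Y0).
exists s.+1 => n hn.
have nY : Y < INR n.
  apply: Rlt_le_trans s2 _; rewrite -S_INR; apply: le_INR; apply/leP; exact hn.
have := Rlt_Rpower_l Y (INR n) u u0 (conj Y0 nY).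
rewrite /Y Rpower_mult Rinv_l ?Rpower_1; last lra.
  by move=> h; apply: Rle_lt_trans h; apply: Rmax_l.
apply: Rlt_le_trans Rlt_0_1 _; apply: Rmax_r.
Qed.

Lemma En_interior tau1 tau2 a b : leq 1 tau2 -> leq tau2 tau1 ->
  b < a + 1 -> 2 * b < 2 + a -> b < 2 ->
  exists N0 : nat, forall n, leq N0 n -> (tau1 < n)%nat /\ En tau1 tau2 n (a, b).
Proof.
move=> t2p t21 ba1 ba2 b2.
set lo := Rmax (b - a) 0; set hi := Rmin 1 (2 - b).
have lohi : lo < hi.
  apply: Rmax_lub_lt; apply: Rmin_glb_lt; lra.
set g := (lo + hi) / 2.
have g1 : b - a < g by have := Rmax_l (b - a) 0; rewrite /g -/lo; lra.
have g0 : 0 < g by have := Rmax_r (b - a) 0; rewrite /g -/lo; lra.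
have g2 : g < 1 by have := Rmin_l 1 (2 - b); rewrite /g -/hi; lra.
have g3 : g < 2 - b by have := Rmin_r 1 (2 - b); rewrite /g -/hi; lra.
have t1R := pos_INR tau1.
have [N1 h1] := eventually_pow (2 * INR tau1 + 3) g0.
have [N2 h2] := eventually_pow 4 (ltac:(lra) : 0 < 2 - b - g).
have [N3 h3] := eventually_pow (4 * INR tau1 + 1) (ltac:(lra) : 0 < g + a - b).
exists (maxn (maxn N1 N2) (maxn N3 (maxn tau1.+1 2))) => n hn.
have hn1 : leq N1 n by apply: leq_trans hn; rewrite !leq_max leqnn.
have hn2 : leq N2 n by apply: leq_trans hn; rewrite !leq_max leqnn orbT.
have hn3 : leq N3 n by apply: leq_trans hn; rewrite !leq_max leqnn !orbT.
have hn4 : (tau1 < n)%nat by apply: leq_trans hn; rewrite !leq_max leqnn !orbT.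
have hn5 : (1 < n)%nat by apply: leq_trans hn; rewrite !leq_max leqnn !orbT.
split => //.
have E1 := h1 n hn1; have E2 := h2 n hn2; have E3 := h3 n hn3.
have nR2 : 2 <= INR n.
  have : (2 <= n)%coq_nat by apply/leP.
  by move/le_INR.
set P := Rpower (INR n).
have [r [r1 r2]] := nat_floor (Rlt_le _ _ (Rpower_pos (INR n) g)).
have rR : 2 * INR tau1 + 2 < INR r by lra.
have t1r : (tau1 < r)%nat.
  apply/ltP; apply: INR_lt; lra.
have rn : leq r n.
  apply/leP; apply: INR_le; apply: Rle_trans r1 _.
  rewrite -{2}(Rpower_1 (INR n)); last lra.
  apply: Rle_Rpower; lra.
have nb : 0 < P b := Rpower_pos _ _.
have na : 0 < P a := Rpower_pos _ _.
have ng : 0 < P g := Rpower_pos _ _.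
have r1' : INR r <= P g := r1.
have r2' : P g < INR r + 1 := r2.
have E1' : 2 * INR tau1 + 3 < P g := E1.
have E2' : 4 < P (2 - b - g) := E2.
have E3' : 4 * INR tau1 + 1 < P (g + a - b) := E3.
have ln0 : ln (INR n) <> 0 by have := ln_pos_INR hn5; lra.
exists ((P a + P b) / INR n), (P b); split; last split; last split.
- apply: (@layered_ach n tau1 tau2 r) => //; try lra.
  +
    have eP : P 2 = P (b + g) * P (2 - b - g) by rewrite /P -Rpower_plus; f_equal; ring.
    have eP2 : P 2 = INR n * INR n by rewrite /P (_ : 2 = INR 2) // Rpower_pow /=; [ring | lra].
    have eP3 : P (b + g) = P b * P g by rewrite /P Rpower_plus.
    have Pbg : 0 < P (b + g) := Rpower_pos _ _.
    have s1 : P b * INR r * (INR r - 1) <= P b * INR r * P g.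
      apply: Rmult_le_compat_l; first nra. lra.
    have s2 : INR r * (INR n * INR n) / 4 <= (INR r - INR tau1) * INR n * (INR n - 1).
      have : INR r / 2 <= INR r - INR tau1 by lra.
      have : INR n * INR n / 2 <= INR n * (INR n - 1) by nra.
      nra.
    have s3 : P b * INR r * P g < INR r * (INR n * INR n) / 4.
      rewrite -eP2 eP eP3.
      have X0 : 0 < P b * P g * INR r by apply: Rmult_lt_0_compat; [nra | lra].
      have := Rmult_lt_compat_l _ _ _ X0 E2'.
      lra.
    lra.
  +
    have eP : P (g + a) = P b * P (g + a - b) by rewrite /P -Rpower_plus; f_equal; ring.
    have eP2 : P (g + a) = P g * P a by rewrite /P Rpower_plus.
    have s1 : P g / 4 < INR r - INR tau1 by lra.
    have s2 : P g * P a / 4 <= (INR r - INR tau1) * P a by nra.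
    have s3 : INR tau1 * P b < P g * P a / 4.
      rewrite -eP2 eP.
      have : 0 < P (g + a - b) := Rpower_pos _ _.
      nra.
    nra.
- have -> : INR n * ((P a + P b) / INR n) - P b = P a by field; lra.
  exact: na.
- exact: nb.
- have -> : INR n * ((P a + P b) / INR n) - P b = P a by field; lra.
  rewrite /P !ln_Rpower; f_equal; field; exact: ln0.
Qed.

End Reals_part.

Theorem mainTheorem1 (tau1 tau2 : nat) :
  leq 1 tau2 -> leq tau2 tau1 ->
  forall p : R * R, Estar p <-> closure2 (limsupE tau1 tau2) p.
Proof.
move=> t2p t21 p; split.
- move=> [h1 [h2 h3]] eps e0.
  pose q := (fst p, (snd p - eps / 2)%R).
  exists q; split.
    have [N0 HN] := @En_interior tau1 tau2 (fst p) (snd p - eps / 2)%R t2p t21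
      ltac:(lra) ltac:(lra) ltac:(lra).
    exists (fun j => (N0 + j)%nat), (fun _ => q); split; [|split; [|split; [|split]]].
    + by move=> j; have [] := HN (N0 + j)%nat (leq_addr _ _).
    + by move=> j; have [] := HN (N0 + j)%nat (leq_addr _ _).
    + by move=> B; exists B => j hj; apply: leq_trans hj (leq_addl _ _).
    + exact: cv_const.
    + exact: cv_const.
  rewrite /q /= Rminus_diag Rabs_R0.
  have -> : (snd p - eps / 2 - snd p = - (eps / 2))%R by ring.
  rewrite Rabs_Ropp Rabs_right; lra.
- move=> hc; apply: (closure_Estar _ hc) => q; exact: limsup_Estar.
Qed.
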